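(* Let $F=(n_F)_{n\ge0}$ be the sequence of natural numbers, $n_F=n$ for $n\ge1$. Then for all integers $k,n$ with $0\le k<n$, the layer $\langle\Phi_{k+1}\to\Phi_n\rangle$ of the cobweb poset of $F$ (which has $m=n-k$ levels) admits at least one tiling by blocks of type $\sigma P_m$.
   Context: Notation: $n_F\equiv F_n$. For a sequence $F=(n_F)_{n\ge0}$ of nonnegative integers, the cobweb poset of $F$ has, for each $s\ge1$, a level $\Phi_s$ consisting of $s_F$ distinct vertices (levels pairwise disjoint), plus a root level $\Phi_0$ with one vertex; for $x\in\Phi_i$, $y\in\Phi_j$ one has $x<y$ iff $i<j$. For $1\le a\le b$, the layer $\langle\Phi_a\to\Phi_b\rangle$ is the subposet on $\Phi_a\cup\dots\cup\Phi_b$; it has $m=b-a+1$ levels, and its maximal chains are exactly the tuples $(x_a,\dots,x_b)$ with $x_j\in\Phi_j$, i.e. the set $\Phi_a\times\dots\times\Phi_b$. For a permutation $\sigma$ of $\{1,\dots,m\}$, a block of type $\sigma P_m$ in this layer is the subposet induced on $V_a\cup\dots\cup V_b$ where $V_{a-1+i}\subseteq\Phi_{a-1+i}$ and $|V_{a-1+i}|=\sigma(i)_F$ for $i=1,\dots,m$ (a copy of the prime cobweb poset $P_m$, whose levels have sizes $1_F,\dots,m_F$, with its levels permuted by $\sigma$); its maximal chains form the set $V_a\times\dots\times V_b$. A tiling of the layer by blocks of type $\sigma P_m$ is a finite family of such blocks ($\sigma$ may vary from block to block) that are pairwise max-disjoint (no two share a maximal chain) and together contain every maximal chain of the layer; equivalently,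 the sets $V_a\times\dots\times V_b$ of the blocks partition $\Phi_a\times\dots\times\Phi_b$. *)

(* Defs.v *)
From mathcomp Require Import all_boot all_fingroup.
Set Implicit Arguments. Unset Strict Implicit. Unset Printing Implicit Defensive.

(* Cobweb poset of a sequence F : nat -> nat.  Level Phi_s has F s vertices,
   modelled as 'I_(F s).  The layer <Phi_a -> Phi_(a+m-1)> has m levels;
   its i-th level (i : 'I_m, 0-based) is Phi_(a+i). *)

(* A maximal chain of the layer: one vertex in each level. *)
Definition chain (F : nat -> nat) (a m : nat) := forall i : 'I_m, 'I_(F (a + i)).

(* A candidate block: a permutation sigma of the m levels (0-based, so the
   paper's sigma(i+1) is (bsigma i).+1) and subsets V_(a+i) of Phi_(a+i). *)
Record block (F : nat -> nat) (a m : nat) := Block {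
  bsigma : 'S_m;
  bV : forall i : 'I_m, {set 'I_(F (a + i))}
}.

Definition is_block F a m (B : block F a m) : Prop :=
  forall i : 'I_m, #|bV B i| = F (bsigma B i).+1.

Definition in_block F a m (B : block F a m) (c : chain F a m) : bool :=
  [forall i : 'I_m, c i \in bV B i].

(* A tiling: a finite family of blocks of type sigma P_m (sigma may vary)
   whose chain-sets partition the set of maximal chains of the layer:
   every maximal chain lies in exactly one member of the family. *)
(* j-th member of the family (default beyond the end is never used). *)
Definition nth_block F a m (T : seq (block F a m)) (j : nat) : block F a m :=
  nth (Block 1 (fun i => set0)) T j.

Definition tiling F a m (T : seq (block F a m)) : Prop :=
  (forall j, j < size T -> is_block (nth_block T j)) /\
  (forall c : chain F a m, count (fun B => in_block B c) T = 1).

Definition natF (n : nat) : nat := n.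

(* Main.v *)
Require Import Defs.
From mathcomp Require Import all_boot all_fingroup.
From Stdlib Require List.
Set Implicit Arguments. Unset Strict Implicit. Unset Printing Implicit Defensive.

Record ablock := AB { sg : nat -> nat; VV : nat -> pred nat }.

Definition goodp m (s : nat -> nat) :=
  (forall i, i < m -> s i < m) /\ (forall i j, i < m -> j < m -> s i = s j -> i = j).

Definition inb m (B : ablock) (c : nat -> nat) := all (fun i => VV B i (c i)) (iota 0 m).

Definition atiling j m (T : seq ablock) :=
  (forall B, List.In B T -> goodp m (sg B) /\
      forall i, i < m -> count (VV B i) (iota 0 (j + i)) = (sg B i).+1) /\
  (forall c : nat -> nat, (forall i, i < m -> c i < j + i) -> count (fun B => inb m B c) T = 1).

Definition extA m (B : ablock) :=
  AB (fun i => if i < m then sg B i else m) (fun i x => if i < m then VV B i x else x < m.+1).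
Definition extR m (C : ablock) :=
  AB (fun i => if i < m then sg C i.+1 else sg C 0)
     (fun i x => if i < m then VV C i.+1 x else (m.+1 <= x) && VV C 0 (x - m.+1)).

Lemma iota_split m j : iota 0 (j.+1 + m) = iota 0 m.+1 ++ map (addn m.+1) (iota 0 j).
Proof. by rewrite addSnnS addnC iotaD -iotaDl addn0. Qed.

Lemma iota_split' m j : 0 :: iota 1 (j + m) = iota 0 m.+1 ++ map (addn m.+1) (iota 0 j).
Proof.
have -> : 0 :: iota 1 (j + m) = iota 0 (m.+1 + j) by rewrite addSn addnC.
by rewrite iotaD -iotaDl addn0.
Qed.

Lemma inb_S m B c : inb m.+1 B c = inb m B c && VV B m (c m).
Proof. by rewrite /inb -addn1 iotaD all_cat /= andbT. Qed.

Lemma inb_S0 m B c : inb m.+1 B c = VV B 0 (c 0) && inb m (AB (fun i => sg B i.+1) (fun i => VV B i.+1)) (fun i => c i.+1).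
Proof. by rewrite /inb /= -[1]addn0 iotaDl all_map. Qed.

Lemma inb_eq m B B' c c' : (forall i, i < m -> VV B i (c i) = VV B' i (c' i)) -> inb m B c = inb m B' c'.
Proof.
move=> H; apply: eq_in_all => i; rewrite mem_iota /= add0n; exact: H.
Qed.

Lemma goodA m s : goodp m s -> goodp m.+1 (fun i => if i < m then s i else m).
Proof.
move=> [g1 g2]; split.
- move=> i Hi; case: (ltnP i m) => lt; [exact: leq_trans (g1 _ lt) _ | by []].
- move=> i j Hi Hj; case: (ltnP i m) => li; case: (ltnP j m) => lj.
  + exact: g2.
  + move=> e; have := g1 _ li; rewrite e ltnn => F; exfalso; by [].
  + move=> e; have := g1 _ lj; rewrite -e ltnn => F; exfalso; by [].
  + move=> _; have ei : i = m by apply: anti_leq; rewrite -ltnS Hi li.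
    have ej : j = m by apply: anti_leq; rewrite -ltnS Hj lj.
    by rewrite ei ej.
Qed.
Lemma goodR m s : goodp m.+1 s -> goodp m.+1 (fun i => if i < m then s i.+1 else s 0).
Proof.
move=> [g1 g2]; split.
- by move=> i Hi; case: (ltnP i m) => lt; apply: g1.
- move=> i j Hi Hj; case: (ltnP i m) => li; case: (ltnP j m) => lj.
  + by move=> e; have := g2 i.+1 j.+1 li lj e; case.
  + by move=> e; have := g2 i.+1 0 li (ltn0Sn m) e.
  + by move=> e; have := g2 0 j.+1 (ltn0Sn m) lj e.
  + move=> _; have ei : i = m by apply: anti_leq; rewrite -ltnS Hi li.
    have ej : j = m by apply: anti_leq; rewrite -ltnS Hj lj.
    by rewrite ei ej.
Qed.

Lemma step j m T1 T2 : atiling j.+1 m T1 -> atiling j m.+1 T2 ->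
  atiling j.+1 m.+1 (map (extA m) T1 ++ map (extR m) T2).
Proof.
move=> [H1 C1] [H2 C2]; split.
- move=> B /List.in_app_iff [] /List.in_map_iff [B0 [<- HB0]].
  + have [gp g3] := H1 _ HB0; split; first exact: goodA gp.
    * move=> i; cbn [VV sg extA extR]; rewrite ltnS leq_eqVlt => /orP [/eqP ->|lt].
      - rewrite ltnn addSn iota_split count_cat count_map.
        rewrite (eq_in_count (a2 := predT)); last by move=> x; rewrite mem_iota.
        rewrite count_predT size_iota (eq_count (a2 := pred0)) ?count_pred0 ?addn0 //.
        by move=> x /=; rewrite ltnNge leq_addr.
      - by rewrite lt g3.
  + have [gp g3] := H2 _ HB0; split; first exact: goodR gp.
    * move=> i; cbn [VV sg extA extR]; rewrite ltnS leq_eqVlt => /orP [/eqP ->|lt].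
      - rewrite ltnn addSn iota_split count_cat count_map.
        rewrite (eq_in_count (a2 := pred0)); last first.
          by move=> x; rewrite mem_iota /= add0n ltnS => /leq_ltn_trans; rewrite leqNgt => ->.
        rewrite count_pred0 add0n -(g3 0) // addn0; apply: eq_count => x /=.
        by rewrite leq_addr addKn.
      - by rewrite lt addSnnS g3.
- move=> c Hc; rewrite count_cat !count_map.
  case: (ltnP (c m) m.+1) => cm.
  + rewrite (eq_count (a2 := fun B => inb m B c)); last first.
      move=> B /=; rewrite inb_S /= ltnn cm andbT; by apply: inb_eq => i lt /=; rewrite lt.
    rewrite C1; last by move=> i lt; apply: Hc; rewrite ltnS ltnW.
    rewrite (eq_count (a2 := pred0)) ?count_pred0 // => B /=.
    by rewrite inb_S /= ltnn leqNgt cm andbF.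
  + rewrite (eq_count (a2 := pred0)); last first.
      by move=> B /=; rewrite inb_S /= ltnn ltnNge cm andbF.
    rewrite count_pred0 add0n.
    rewrite -(C2 (fun i => if i is i'.+1 then c i' else c m - m.+1)); last first.
      move=> [|i] /=.
      * by move=> _; rewrite addn0 ltn_subLR // addnC -addSnnS; apply: Hc.
      * by move=> lt; rewrite -addSnnS; apply: Hc; apply: ltnW.
    apply: eq_count => B /=.
    rewrite inb_S /= ltnn cm inb_S0 /= andbC; congr andb.
    by apply: inb_eq => i lt /=; rewrite lt.
Qed.

Lemma base0 j : atiling j 0 [:: AB (fun i => i) (fun _ _ => true)].
Proof.
split; last by move=> c _; rewrite /= /inb.
move=> B [<-|[]]; split => //; split => // i j'.
Qed.

Lemma basej m : atiling 0 m.+1 [::].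
Proof. split => // c Hc; by have := Hc 0 (ltn0Sn _). Qed.

Lemma main m j : exists T, atiling j m T.
Proof.
elim: m j => [|m IHm] j; first by exists [:: AB (fun i => i) (fun _ _ => true)]; exact: base0.
elim: j => [|j IHj]; first by exists [::]; exact: basej.
have [T1 H1] := IHm j.+1; have [T2 H2] := IHj.
by exists (map (extA m) T1 ++ map (extR m) T2); exact: step.
Qed.

Lemma card_count N (P : pred nat) : #|[set x : 'I_N | P (val x)]| = count P (iota 0 N).
Proof.
rewrite cardsE cardE /enum_mem size_filter -val_enum_ord count_map enumT.
by apply: eq_count => x.
Qed.

Definition mkperm m (f : 'I_m -> 'I_m) : 'S_m :=
  odflt (1%g : 'S_m) [pick s : 'S_m | [forall i, s i == f i]].

Lemma mkpermE m (f : 'I_m -> 'I_m) : injective f -> mkperm f =1 f.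
Proof.
rewrite /mkperm => inj; case: pickP => [s /forallP H | H] i /=; first exact/eqP.
have := H (perm inj); rewrite /=.
suff -> : [forall i0, perm inj i0 == f i0] by [].
by apply/forallP => x; rewrite permE.
Qed.

Definition toBlock a m (B : ablock) : block natF a m :=
  Block (mkperm (fun i : 'I_m => insubd i (sg B i)))
        (fun i => [set x : 'I_(natF (a + i)) | VV B i (val x)]).

Definition cn a m (c : chain natF a m) (i : nat) : nat :=
  match (insub i : option 'I_m) with Some i' => val (c i') | None => 0 end.

Lemma nth_In (T : Type) (x0 : T) s j : j < size s -> List.In (nth x0 s j) s.
Proof.
elim: s j => [|x s IH] [|j] //= H; first by left.
by right; apply: IH.
Qed.

Theorem theorem1 (k n : nat) (hkn : k < n) :
  exists T : seq (block natF k.+1 (n - k)), tiling T.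
Proof.
have [T [HT CT]] := main (n - k) k.+1.
exists (map (@toBlock k.+1 (n - k)) T); split.
- move=> j; rewrite size_map => Hj.
  rewrite /nth_block (nth_map (AB (fun i => i) (fun _ _ => true))) //.
  have [[g1 g2] g3] := HT _ (nth_In (AB (fun i => i) (fun _ _ => true)) Hj).
  set B := nth _ T j.
  move=> i /=; rewrite card_count mkpermE.
    by rewrite val_insubd g1 // g3.
  move=> x y /(congr1 val); rewrite !val_insubd !g1 // => /g2 e.
  by apply: val_inj; apply: e.
- move=> c; rewrite count_map -(CT (cn c)).
    apply: eq_count => B /=; rewrite /in_block /inb /=.
    apply/forallP/allP => /= H i.
    + rewrite mem_iota /= add0n => lt.
      rewrite /cn insubT /=; have := H (Ordinal lt); by rewrite inE.
    + rewrite inE; have := H i; rewrite mem_iota /= add0n ltn_ord /cn valK; exact.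
  move=> i lt; rewrite /cn insubT /=.
  exact: ltn_ord (c (Ordinal lt)).
Qed.
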